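(* Let $n\ge2$ and let $\mathsf u$ be a subword of $\bm\lambda_n$ with $u_1\cdots u_{n(n-1)}=e$. If $(\!(a,b)\!)$ is a reflection appearing in $\textsc{inv}(\mathsf u)$, then $|b-a|\le n-1$.
   Context: $\widetilde S_n$ is the group, under composition, of bijections $w:\mathbb Z\to\mathbb Z$ with $w(i+n)=w(i)+n$ and $\sum_{i=1}^n w(i)=\binom{n+1}2$. For $i\not\equiv j\pmod n$, $(\!(i,j)\!)$ is the reflection swapping $i+kn$ and $j+kn$ for all $k$; $(\!(i,j)\!)=(\!(j,i)\!)=(\!(i+kn,j+kn)\!)$, so $|j-i|$ depends only on the reflection. $s_i=(\!(i,i+1)\!)$ for $i\in\{0,\dots,n-1\}$. $\bm\lambda_n$ is the word $[s_0,\dots,s_{n-1}]$ repeated $n-1$ times with $j$-th letter $\sigma_j=s_{(j-1)\bmod n}$ (index in $\{0,\dots,n-1\}$). A subword is $\mathsf u=[u_1,\dots,u_{n(n-1)}]$ with $u_j\in\{\sigma_j,e\}$. Write $u_{(j)}=u_1\cdots u_j$ with $u_{(0)}=e$. $\textsc{inv}(\mathsf u)=[t_1,\dots,t_{n(n-1)}]$ with $t_j=u_{(j-1)}\sigma_j u_{(j-1)}^{-1}$. *)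

(* Defs.v *)
From Stdlib Require Import ZArith Lia.
Open Scope Z_scope.

(* The reflection ((i,j)) of the affine symmetric group ~S_n: it swaps
   i + k n and j + k n for every integer k (meaningful when i, j are not
   congruent mod n); all other integers are fixed. *)
Definition refl (n : nat) (i j : Z) : Z -> Z := fun x =>
  let N := Z.of_nat n in
  if Z.eqb (x mod N) (i mod N) then x + (j - i)
  else if Z.eqb (x mod N) (j mod N) then x + (i - j)
  else x.

Definition sref (n : nat) (i : Z) : Z -> Z := refl n i (i + 1).

(* j-th letter of the word lambda_n = [s_0,...,s_{n-1}]^(n-1):
   sigma_j = s_{(j-1) mod n}, for j >= 1 *)
Definition sigma (n j : nat) : Z -> Z := sref n (Z.of_nat ((j - 1) mod n)).

(* A subword u of lambda_n is encoded by b : nat -> bool: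
   u_j = sigma_j if b j = true, u_j = e otherwise (1 <= j <= n(n-1)). *)
Definition letter (n : nat) (b : nat -> bool) (j : nat) : Z -> Z :=
  if b j then sigma n j else (fun x => x).

Fixpoint uprefix (n : nat) (b : nat -> bool) (k : nat) : Z -> Z :=
  match k with
  | O => fun x => x
  | S k' => fun x => uprefix n b k' (letter n b k x)
  end.

(* (u_(k))^{-1} = u_k ... u_2 u_1, since every u_j is an involution *)
Fixpoint uprefix_inv (n : nat) (b : nat -> bool) (k : nat) : Z -> Z :=
  match k with
  | O => fun x => x
  | S k' => fun x => letter n b k (uprefix_inv n b k' x)
  end.

(* t_j = u_(j-1) sigma_j u_(j-1)^{-1}, the j-th entry of inv(u) *)
Definition tinv (n : nat) (b : nat -> bool) (j : nat) : Z -> Z :=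
  fun x => uprefix n b (j - 1) (sigma n j (uprefix_inv n b (j - 1) x)).

(* Main.v *)
Require Import Defs.
From Stdlib Require Import ZArith Lia.
Open Scope Z_scope.

Definition piece (N v : Z) : Z :=
  if v <? -N then v + 2*N else if v <? 0 then v + N else if v <? N then v else v - N.

Lemma mod_piece N v : 0 < N -> -2*N <= v < 2*N -> v mod N = piece N v.
Proof.
  intros HN Hv. unfold piece.
  destruct (Z.ltb_spec v (-N)); [symmetry; apply Z.mod_unique with (-2); lia|].
  destruct (Z.ltb_spec v 0); [symmetry; apply Z.mod_unique with (-1); lia|].
  destruct (Z.ltb_spec v N); [symmetry; apply Z.mod_unique with 0; lia|].
  symmetry; apply Z.mod_unique with 1; lia.
Qed.

Lemma modB N B e r : 0 < N -> r = B mod N -> -N <= e - B < N ->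
  e mod N = piece N (r + (e - B)).
Proof.
  intros HN Hr He. subst r. pose proof (Z.mod_pos_bound B N HN).
  rewrite <- mod_piece by lia.
  rewrite Z.add_mod_idemp_l by lia. f_equal; ring.
Qed.

Ltac redall N B r Hr :=
  repeat match goal with
  | |- context [?e mod N] => rewrite (modB N B e r) by (auto; lia)
  | H : context [?e mod N] |- _ => rewrite (modB N B e r) in H by (auto; lia)
  end.

Ltac crush :=
  unfold piece in *;
  repeat match goal with
  | |- context [Z.ltb ?a ?b] => destruct (Z.ltb_spec a b)
  | H : context [Z.ltb ?a ?b] |- _ => destruct (Z.ltb_spec a b)
  end; lia.


Lemma sref_cases n i x : (2 <= n)%nat ->
  ((x - i) mod Z.of_nat n = 0 /\ sref n i x = x + 1) \/
  ((x - i) mod Z.of_nat n = 1 /\ sref n i x = x - 1) \/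
  ((x - i) mod Z.of_nat n <> 0 /\ (x - i) mod Z.of_nat n <> 1 /\ sref n i x = x).
Proof.
  intros hn. set (N := Z.of_nat n).
  assert (HN : 2 <= N) by (unfold N; lia).
  unfold sref, refl. fold N.
  pose proof (Z.mod_pos_bound x N ltac:(lia)).
  pose proof (Z.mod_pos_bound i N ltac:(lia)).
  rewrite Zminus_mod. rewrite (Zplus_mod i 1).
  rewrite (mod_piece N (x mod N - i mod N)) by lia.
  rewrite (Z.mod_small 1 N) by lia.
  rewrite (mod_piece N (i mod N + 1)) by lia.
  remember (x mod N) as X. remember (i mod N) as I.
  unfold piece.
  repeat match goal with
  | |- context [Z.ltb ?a ?b] => destruct (Z.ltb_spec a b)
  | |- context [Z.eqb ?a ?b] => destruct (Z.eqb_spec a b)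
  end; cbn beta iota; try lia.
Qed.

Lemma letter_S_idx n b k : letter n b (S k) =
  if b (S k) then sref n (Z.of_nat k mod Z.of_nat n) else (fun x => x).
Proof.
  unfold letter, sigma. replace (S k - 1)%nat with k by lia.
  rewrite Nat2Z.inj_mod. reflexivity.
Qed.

Lemma step_desc n b k x : (2 <= n)%nat ->
  (Z.of_nat n - 1) * (letter n b (S k) x - x)
  + ((letter n b (S k) x - Z.of_nat k - 1) mod Z.of_nat n)
  <= 1 + ((x - Z.of_nat k - 2) mod Z.of_nat n).
Proof.
  intros hn. rewrite letter_S_idx. set (N := Z.of_nat n).
  assert (HN : 2 <= N) by (unfold N; lia).
  set (kz := Z.of_nat k).
  remember ((x - kz) mod N) as r eqn:Hr.
  pose proof (Z.mod_pos_bound (x - kz) N ltac:(lia)) as Hb. rewrite <- Hr in Hb.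
  destruct (b (S k)); cbn beta.
  - destruct (sref_cases n (kz mod N) x hn) as [[H1 E]|[[H1 E]|[H1 [H2 E]]]];
      fold N in H1; rewrite Zminus_mod_idemp_r in H1; rewrite <- Hr in H1;
      rewrite E; redall N (x - kz) r Hr; crush.
  - redall N (x - kz) r Hr; crush.
Qed.

Lemma step_asc n b m y : (2 <= n)%nat ->
  (Z.of_nat n - 1) * (y - letter n b (S m) y)
  - ((letter n b (S m) y - Z.of_nat m - 1) mod Z.of_nat n)
  <= 1 - ((y - Z.of_nat m) mod Z.of_nat n).
Proof.
  intros hn. rewrite letter_S_idx. set (N := Z.of_nat n).
  assert (HN : 2 <= N) by (unfold N; lia).
  set (kz := Z.of_nat m).
  remember ((y - kz) mod N) as r eqn:Hr.
  pose proof (Z.mod_pos_bound (y - kz) N ltac:(lia)) as Hb. rewrite <- Hr in Hb.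
  destruct (b (S m)); cbn beta.
  - destruct (sref_cases n (kz mod N) y hn) as [[H1 E]|[[H1 E]|[H1 [H2 E]]]];
      fold N in H1; rewrite Zminus_mod_idemp_r in H1; rewrite <- Hr in H1;
      rewrite E; redall N (y - kz) r Hr; crush.
  - redall N (y - kz) r Hr; crush.
Qed.

Lemma desc n b : (2 <= n)%nat -> forall k x,
  (Z.of_nat n - 1) * (uprefix n b k x - x)
  <= Z.of_nat k + ((x - Z.of_nat k - 1) mod Z.of_nat n).
Proof.
  intros hn. induction k as [|k IH]; intros x.
  - cbn [uprefix]. pose proof (Z.mod_pos_bound (x - Z.of_nat 0 - 1) (Z.of_nat n) ltac:(lia)). lia.
  - cbn [uprefix]. specialize (IH (letter n b (S k) x)).
    pose proof (step_desc n b k x hn).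
    replace (x - Z.of_nat (S k) - 1) with (x - Z.of_nat k - 2) by lia.
    rewrite Nat2Z.inj_succ. lia.
Qed.

Fixpoint aseg (n : nat) (b : nat -> bool) (s L : nat) (x : Z) : Z :=
  match L with
  | O => x
  | S L' => letter n b (s + L) (aseg n b s L' x)
  end.

Fixpoint dseg (n : nat) (b : nat -> bool) (s L : nat) (x : Z) : Z :=
  match L with
  | O => x
  | S L' => dseg n b s L' (letter n b (s + L) x)
  end.

Lemma asc n b : (2 <= n)%nat -> forall s L x,
  (Z.of_nat n - 1) * (x - aseg n b s L x)
  - ((aseg n b s L x - Z.of_nat (s + L)) mod Z.of_nat n)
  <= Z.of_nat L - ((x - Z.of_nat s) mod Z.of_nat n).
Proof.
  intros hn s. induction L as [|L IH]; intros x.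
  - cbn [aseg]. rewrite Nat.add_0_r. lia.
  - cbn [aseg]. specialize (IH x).
    replace (s + S L)%nat with (S (s + L)) by lia.
    pose proof (step_asc n b (s + L) (aseg n b s L x) hn).
    rewrite !Nat2Z.inj_succ.
    replace (letter n b (S (s + L)) (aseg n b s L x) - Z.succ (Z.of_nat (s + L)))
      with (letter n b (S (s + L)) (aseg n b s L x) - Z.of_nat (s + L) - 1) by lia.
    lia.
Qed.

Lemma sref_invol n i x : (2 <= n)%nat -> sref n i (sref n i x) = x.
Proof.
  intros hn.
  destruct (sref_cases n i x hn) as [[H1 E]|[[H1 E]|[H1 [H2 E]]]]; rewrite E.
  - destruct (sref_cases n i (x + 1) hn) as [[G1 F]|[[G1 F]|[G1 [G2 F]]]]; rewrite F;
    try lia; exfalso;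
    replace (x + 1 - i) with ((x - i) + 1) in * by ring;
    rewrite <- Z.add_mod_idemp_l in * by lia; rewrite H1 in *;
    rewrite Z.mod_small in * by lia; lia.
  - destruct (sref_cases n i (x - 1) hn) as [[G1 F]|[[G1 F]|[G1 [G2 F]]]]; rewrite F;
    try lia; exfalso;
    replace (x - 1 - i) with ((x - i) + -1) in * by ring;
    rewrite <- Z.add_mod_idemp_l in * by lia; rewrite H1 in *;
    rewrite Z.mod_small in * by lia; lia.
  - rewrite E. reflexivity.
Qed.

Lemma letter_invol n b k x : (2 <= n)%nat -> letter n b k (letter n b k x) = x.
Proof.
  intros hn. unfold letter. destruct (b k); [apply sref_invol; auto | reflexivity].
Qed.

Lemma up_split n b s : forall L x, uprefix n b (s + L) x = uprefix n b s (dseg n b s L x).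
Proof.
  induction L as [|L IH]; intros x.
  - rewrite Nat.add_0_r. reflexivity.
  - replace (s + S L)%nat with (S (s + L)) by lia. cbn [uprefix dseg].
    rewrite IH. replace (s + S L)%nat with (S (s + L)) by lia. reflexivity.
Qed.

Lemma ds_as n b s : (2 <= n)%nat -> forall L x, dseg n b s L (aseg n b s L x) = x.
Proof.
  intros hn. induction L as [|L IH]; intros x.
  - reflexivity.
  - cbn [aseg dseg]. rewrite letter_invol by auto. apply IH.
Qed.

Lemma aseg_S n b : forall L s x, aseg n b s (S L) x = aseg n b (S s) L (letter n b (S s) x).
Proof.
  induction L as [|L IH]; intros s x.
  - cbn [aseg]. rewrite Nat.add_1_r. reflexivity.
  - change (aseg n b s (S (S L)) x) with (letter n b (s + S (S L)) (aseg n b s (S L) x)).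
    rewrite IH. cbn [aseg]. replace (s + S (S L))%nat with (S s + S L)%nat by lia.
    reflexivity.
Qed.

Lemma up_inv n b : (2 <= n)%nat -> forall k x, uprefix n b k (uprefix_inv n b k x) = x.
Proof.
  intros hn. induction k as [|k IH]; intros x.
  - reflexivity.
  - cbn [uprefix uprefix_inv]. rewrite letter_invol by auto. apply IH.
Qed.

Lemma neg_of_mul N X : 0 < N - 1 -> (N - 1) * X < 0 -> X < 0.
Proof.
  intros H1 H2. destruct (Z.ltb_spec X 0); auto.
  pose proof (Z.mul_nonneg_nonneg (N - 1) X ltac:(lia) ltac:(lia)). lia.
Qed.

Theorem lemma5p13 (n : nat) (hn : (2 <= n)%nat) (b : nat -> bool)
  (he : forall x : Z, uprefix n b (n * (n - 1)) x = x)
  (j : nat) (hj1 : (1 <= j)%nat) (hj2 : (j <= n * (n - 1))%nat)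
  (a c : Z) (hac : a mod Z.of_nat n <> c mod Z.of_nat n)
  (ht : forall x : Z, tinv n b j x = refl n a c x) :
  Z.abs (c - a) <= Z.of_nat n - 1.
Proof.
  set (N := Z.of_nat n).
  assert (HN : 2 <= N) by (unfold N; lia).
  set (w := uprefix n b (j - 1)).
  set (L := (n * (n - 1) - j)%nat).
  assert (HL : Z.of_nat L = N * (N - 1) - Z.of_nat j).
  { unfold L, N. rewrite Nat2Z.inj_sub by lia. rewrite Nat2Z.inj_mul.
    rewrite Nat2Z.inj_sub by lia. reflexivity. }
  assert (Hw : forall x, w x = aseg n b j L (letter n b j x)).
  { intro x. unfold w.
    transitivity (uprefix n b (j - 1)
      (dseg n b (j - 1) (n * (n - 1) - (j - 1)) (aseg n b (j - 1) (n * (n - 1) - (j - 1)) x))).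
    { rewrite ds_as by auto. reflexivity. }
    rewrite <- up_split. replace (j - 1 + (n * (n - 1) - (j - 1)))%nat with (n * (n - 1))%nat by lia.
    rewrite he.
    replace (n * (n - 1) - (j - 1))%nat with (S L) by (unfold L; lia).
    rewrite aseg_S. replace (S (j - 1)) with j by lia. reflexivity. }
  set (i := Z.of_nat ((j - 1) mod n)).
  assert (Hi : i = (Z.of_nat j - 1) mod N).
  { unfold i, N. rewrite Nat2Z.inj_mod, Nat2Z.inj_sub by lia. reflexivity. }
  assert (Hsig : sigma n j = sref n i) by reflexivity.
  assert (Core : forall z, (z - (Z.of_nat j - 1)) mod N = 0 -> Z.abs (w (z + 1) - w z) <= N).
  { intros z Hz. symmetry in Hz.
    pose proof (desc n b hn (j - 1) z) as D0. pose proof (desc n b hn (j - 1) (z + 1)) as D1.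
    fold w N in D0, D1. rewrite Nat2Z.inj_sub in D0, D1 by lia. change (Z.of_nat 1) with 1 in D0, D1.
    rewrite (modB N (z - (Z.of_nat j - 1)) _ 0 ltac:(lia) Hz) in D0 by lia.
    rewrite (modB N (z - (Z.of_nat j - 1)) _ 0 ltac:(lia) Hz) in D1 by lia.
    pose proof (asc n b hn j L z) as A0. pose proof (asc n b hn j L (z + 1)) as A1.
    fold N in A0, A1. rewrite HL in A0, A1.
    rewrite (modB N (z - (Z.of_nat j - 1)) (z - Z.of_nat j) 0 ltac:(lia) Hz) in A0 by lia.
    rewrite (modB N (z - (Z.of_nat j - 1)) (z + 1 - Z.of_nat j) 0 ltac:(lia) Hz) in A1 by lia.
    pose proof (Z.mod_pos_bound (aseg n b j L z - Z.of_nat (j + L)) N ltac:(lia)).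
    pose proof (Z.mod_pos_bound (aseg n b j L (z + 1) - Z.of_nat (j + L)) N ltac:(lia)).
    unfold piece in D0, D1, A0, A1; cbn in D0, D1, A0, A1.
    repeat match goal with
    | H : context [Z.ltb ?a ?b] |- _ => destruct (Z.ltb_spec a b)
    end; try lia.
    assert (Ez : (z - i) mod N = 0).
    { rewrite Hi, Zminus_mod_idemp_r. symmetry; exact Hz. }
    assert (Ez1 : (z + 1 - i) mod N = 1).
    { rewrite Hi, Zminus_mod_idemp_r.
      rewrite (modB N (z - (Z.of_nat j - 1)) _ 0 ltac:(lia) Hz) by lia.
      unfold piece. cbn. repeat match goal with
      | |- context [Z.ltb ?a ?b] => destruct (Z.ltb_spec a b) end; lia. }
    assert (Sz : sref n i z = z + 1).
    { destruct (sref_cases n i z hn) as [[Hs1 Es]|[[Hs1 Es]|[Hs1 [Hs2 Es]]]]; try fold N in Hs1; try fold N in Hs2; lia. }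
    assert (Sz1 : sref n i (z + 1) = z).
    { destruct (sref_cases n i (z + 1) hn) as [[Hs1 Es]|[[Hs1 Es]|[Hs1 [Hs2 Es]]]]; try fold N in Hs1; try fold N in Hs2; lia. }
    destruct (b j) eqn:Eb.
    - assert (E0 : w z = aseg n b j L (z + 1)).
      { rewrite Hw. unfold letter. rewrite Eb, Hsig, Sz. reflexivity. }
      assert (E1 : w (z + 1) = aseg n b j L z).
      { rewrite Hw. unfold letter. rewrite Eb, Hsig, Sz1. reflexivity. }
      rewrite E0, E1 in *.
      set (W0 := aseg n b j L (z + 1)) in *. set (W1 := aseg n b j L z) in *.
      assert (W1 - W0 - 1 - N < 0) by (apply (neg_of_mul N); lia).
      assert (W0 - W1 - 1 - N < 0) by (apply (neg_of_mul N); lia).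
      lia.
    - assert (E0 : w z = aseg n b j L z).
      { rewrite Hw. unfold letter. rewrite Eb. reflexivity. }
      assert (E1 : w (z + 1) = aseg n b j L (z + 1)).
      { rewrite Hw. unfold letter. rewrite Eb. reflexivity. }
      rewrite E0, E1 in *.
      set (W1 := aseg n b j L (z + 1)) in *. set (W0 := aseg n b j L z) in *.
      assert (W1 - W0 - 1 - N < 0) by (apply (neg_of_mul N); lia).
      assert (W0 - W1 - 1 - N < 0) by (apply (neg_of_mul N); lia).
      lia.
  }
  set (y := uprefix_inv n b (j - 1) a).
  assert (Hy : w y = a) by (unfold w, y; apply up_inv; auto).
  assert (Hc : w (sref n i y) = c).
  { pose proof (ht a) as Ht. unfold tinv in Ht. rewrite Hsig in Ht. fold w y in Ht.
    rewrite Ht. unfold refl. rewrite Z.eqb_refl. ring. }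
  assert (Hbd : Z.abs (c - a) <= N).
  { destruct (sref_cases n i y hn) as [[Hs1 Es]|[[Hs1 Es]|[Hs1 [Hs2 Es]]]];
      rewrite Es in Hc.
    - rewrite <- Hc, <- Hy. apply Core. fold N in Hs1.
      rewrite Hi, Zminus_mod_idemp_r in Hs1. exact Hs1.
    - rewrite <- Hc, <- Hy. fold N in Hs1.
      rewrite Hi, Zminus_mod_idemp_r in Hs1.
      replace (w y) with (w (y - 1 + 1)) by (f_equal; ring).
      replace (w (y - 1) - w (y - 1 + 1)) with (- (w (y - 1 + 1) - w (y - 1))) by ring. rewrite Z.abs_opp. apply Core.
      symmetry in Hs1.
      rewrite (modB N (y - (Z.of_nat j - 1)) _ 1 ltac:(lia) Hs1) by lia.
      unfold piece. idtac. repeat match goal with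
      | |- context [Z.ltb ?a ?b] => destruct (Z.ltb_spec a b) end; lia.
    - exfalso. apply hac. rewrite <- Hc, <- Hy. reflexivity. }
  assert (c - a <> N).
  { intro E. apply hac. replace c with (a + 1 * N) by lia. fold N. rewrite Z.mod_add; lia. }
  assert (c - a <> - N).
  { intro E. apply hac. replace a with (c + 1 * N) by lia. fold N. rewrite Z.mod_add; lia. }
  fold N. lia.
Qed.
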